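(* Let $(X,d,\preceq)$ be an ordered metric space such that $(X,d)$ is complete, and let $f,g:X\to X$. Suppose: (i) $f(X)\subseteq g(X)$; (ii) $f$ is $g$-comparable; (iii) the pair $(f,g)$ is compatible; (iv) $g$ is continuous; (v) either $f$ is continuous or $(X,d,\preceq)$ has the $g$-TCC property; (vi) there exists $x_0\in X$ such that $g(x_0)\prec\succ f(x_0)$; (vii) there exists $\alpha\in[0,1)$ such that $d(fx,fy)\le \alpha\, d(gx,gy)$ for all $x,y\in X$ with $g(x)\prec\succ g(y)$. Then $f$ and $g$ have a coincidence point, i.e. there is $x\in X$ with $g(x)=f(x)$.
   Context: An ordered metric space $(X,d,\preceq)$ is a nonempty set $X$ with a metric $d$ and a partial order $\preceq$. For $x,y\in X$, write $x\prec\succ y$ (''comparable'') if $x\preceq y$ or $y\preceq x$. For self-maps $f,g$ of $X$: $f$ is $g$-comparable if for all $x,y\in X$, $g(x)\prec\succ g(y)$ implies $f(x)\prec\succ f(y)$. The pair $(f,g)$ is compatible if $\lim_{n\to\infty} d(gfx_n,fgx_n)=0$ whenever $\{x_n\}$ is a sequence in $X$ such that $\{g(x_n)\}$ and $\{f(x_n)\}$ converge to the same point of $X$. A sequence $\{x_n\}$ is termwise monotone if $x_n\prec\succ x_{n+1}$ for all $n\ge 0$. $(X,d,\preceq)$ has the $g$-TCC property if for every termwise monotone sequence $\{x_n\}$ in $X$ converging (in $d$) to some $x\in X$ there is a subsequence $\{x_{n_k}\}$ with $g(x_{n_k})\prec\succ g(x)$ for all $k$. A coincidence point of $f,g$ is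 $x\in X$ with $g(x)=f(x)$. *)

(* Defs.v *)
From Stdlib Require Import Reals.
Open Scope R_scope.

Record is_metric {X : Type} (d : X -> X -> R) : Prop := {
  metric_nonneg : forall x y, 0 <= d x y;
  metric_eq0 : forall x y, d x y = 0 <-> x = y;
  metric_sym : forall x y, d x y = d y x;
  metric_triangle : forall x y z, d x z <= d x y + d y z
}.

Record is_partial_order {X : Type} (le : X -> X -> Prop) : Prop := {
  po_refl : forall x, le x x;
  po_antisym : forall x y, le x y -> le y x -> x = y;
  po_trans : forall x y z, le x y -> le y z -> le x z
}.

Definition seq_converges {X : Type} (d : X -> X -> R) (u : nat -> X) (x : X) : Prop :=
  forall eps, eps > 0 -> exists N, forall n, (n >= N)%nat -> d (u n) x < eps.

Definition is_Cauchy {X : Type} (d : X -> X -> R) (u : nat -> X) : Prop :=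
  forall eps, eps > 0 -> exists N, forall m n, (m >= N)%nat -> (n >= N)%nat ->
    d (u m) (u n) < eps.

Definition complete_metric {X : Type} (d : X -> X -> R) : Prop :=
  forall u : nat -> X, is_Cauchy d u -> exists x, seq_converges d u x.

Definition metric_continuous {X : Type} (d : X -> X -> R) (h : X -> X) : Prop :=
  forall x eps, eps > 0 -> exists delta, delta > 0 /\
    forall y, d x y < delta -> d (h x) (h y) < eps.

Definition comparable {X : Type} (le : X -> X -> Prop) (x y : X) : Prop :=
  le x y \/ le y x.

Definition g_comparable {X : Type} (le : X -> X -> Prop) (f g : X -> X) : Prop :=
  forall x y, comparable le (g x) (g y) -> comparable le (f x) (f y).

Definition compatible_pair {X : Type} (d : X -> X -> R) (f g : X -> X) : Prop :=
  forall (u : nat -> X) (z : X),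
    seq_converges d (fun n => g (u n)) z ->
    seq_converges d (fun n => f (u n)) z ->
    Un_cv (fun n => d (g (f (u n))) (f (g (u n)))) 0.

Definition termwise_monotone {X : Type} (le : X -> X -> Prop) (u : nat -> X) : Prop :=
  forall n, comparable le (u n) (u (S n)).

Definition g_TCC {X : Type} (d : X -> X -> R) (le : X -> X -> Prop) (g : X -> X) : Prop :=
  forall (u : nat -> X) (x : X),
    termwise_monotone le u -> seq_converges d u x ->
    exists phi : nat -> nat,
      (forall k, (phi k < phi (S k))%nat) /\
      forall k, comparable le (g (u (phi k))) (g x).

(* Main.v *)
Require Import Defs.
From Stdlib Require Import Reals Lra Lia ClassicalEpsilon.
Open Scope R_scope.

Section Aux.
Context {X : Type} (d : X -> X -> R) (Hd : is_metric d).

Lemma lim_unique (u v : nat -> X) (a b : X) :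
  seq_converges d u a -> seq_converges d v b ->
  (forall eps, eps > 0 -> exists N, forall n, (n >= N)%nat -> d (u n) (v n) < eps) ->
  a = b.
Proof.
  intros Hu Hv Huv.
  apply (metric_eq0 d Hd).
  pose proof (metric_nonneg d Hd a b).
  destruct (Rle_lt_or_eq_dec 0 (d a b) H) as [Hp|Hz]; [|auto].
  exfalso.
  set (e := d a b / 3).
  assert (He : e > 0) by (unfold e; lra).
  destruct (Hu e He) as [N1 H1]. destruct (Hv e He) as [N2 H2].
  destruct (Huv e He) as [N3 H3].
  set (n := (N1 + N2 + N3)%nat).
  specialize (H1 n ltac:(unfold n; lia)). specialize (H2 n ltac:(unfold n; lia)).
  specialize (H3 n ltac:(unfold n; lia)).
  pose proof (metric_triangle d Hd a (u n) b).
  pose proof (metric_triangle d Hd (u n) (v n) b).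
  rewrite (metric_sym d Hd a (u n)) in H0.
  unfold e in *. lra.
Qed.

Lemma cont_seq (h : X -> X) (u : nat -> X) (z : X) :
  metric_continuous d h -> seq_converges d u z -> seq_converges d (fun n => h (u n)) (h z).
Proof.
  intros Hh Hu eps He.
  destruct (Hh z eps He) as [delta [Hdel Hy]].
  destruct (Hu delta Hdel) as [N HN].
  exists N. intros n Hn. rewrite (metric_sym d Hd). apply Hy.
  rewrite (metric_sym d Hd). auto.
Qed.

Lemma phi_ge (phi : nat -> nat) : (forall k, (phi k < phi (S k))%nat) -> forall k, (k <= phi k)%nat.
Proof. intros H k; induction k; [lia|]. specialize (H k). lia. Qed.

Lemma sub_conv (u : nat -> X) z phi : (forall k, (phi k < phi (S k))%nat) ->
  seq_converges d u z -> seq_converges d (fun k => u (phi k)) z.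
Proof.
  intros Hphi Hu eps He. destruct (Hu eps He) as [N HN]. exists N.
  intros n Hn. apply HN. pose proof (phi_ge phi Hphi n). lia.
Qed.
End Aux.

Theorem theorem3p3 (X : Type) (d : X -> X -> R) (le : X -> X -> Prop)
  (Hne : inhabited X)
  (Hd : is_metric d) (Hle : is_partial_order le) (Hcomplete : complete_metric d)
  (f g : X -> X)
  (Hi : forall x, exists y, f x = g y)
  (Hii : g_comparable le f g)
  (Hiii : compatible_pair d f g)
  (Hiv : metric_continuous d g)
  (Hv : metric_continuous d f \/ g_TCC d le g)
  (Hvi : exists x0, comparable le (g x0) (f x0))
  (Hvii : exists alpha, 0 <= alpha /\ alpha < 1 /\
     forall x y, comparable le (g x) (g y) -> d (f x) (f y) <= alpha * d (g x) (g y)) :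
  exists x, g x = f x.
Proof.
  destruct Hvi as [x0 Hx0].
  destruct Hvii as [al [Hal0 [Hal1 Hc]]].
  set (h := fun x => proj1_sig (constructive_indefinite_description _ (Hi x))).
  assert (Hh : forall x, f x = g (h x)).
  { intro x. unfold h. destruct (constructive_indefinite_description _ (Hi x)); auto. }
  set (xs := fix xs (n : nat) : X := match n with O => x0 | S n => h (xs n) end).
  assert (HxS : forall n, g (xs (S n)) = f (xs n)).
  { intro n. simpl. rewrite Hh. reflexivity. }
  set (y := fun n => g (xs n)).
  assert (Hcomp : forall n, comparable le (y n) (y (S n))).
  { induction n.
    - unfold y. rewrite HxS. exact Hx0.
    - unfold y in *. rewrite !HxS. apply Hii. exact IHn. }
  set (a := fun n => d (y n) (y (S n))).
  assert (Ha : forall n, a n <= al ^ n * a 0%nat).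
  { induction n.
    - simpl. lra.
    - assert (a (S n) <= al * a n).
      { pose proof (Hc _ _ (Hcomp n)) as Hq. unfold y in Hq. rewrite <- !HxS in Hq. exact Hq. }
      simpl. pose proof (Rmult_le_compat_l al _ _ Hal0 IHn). nra. }
  assert (Hpow0 : forall n, 0 <= al ^ n) by (intro; apply pow_le; lra).
  assert (Hsum : forall m k, d (y m) (y (m + k)%nat) * (1 - al) <= a 0%nat * (al ^ m - al ^ (m + k))).
  { intros m k. induction k.
    - rewrite Nat.add_0_r. rewrite (proj2 (metric_eq0 d Hd _ _) eq_refl). lra.
    - rewrite Nat.add_succ_r.
      pose proof (metric_triangle d Hd (y m) (y (m+k)%nat) (y (S (m+k)))).
      pose proof (Ha (m+k)%nat) as H0. change (a (m+k)%nat) with (d (y (m+k)%nat) (y (S (m+k)))) in H0.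
      change (al ^ S (m + k)) with (al * al ^ (m+k)).
      assert (H1a : 0 <= 1 - al) by lra.
      pose proof (Rmult_le_compat_r _ _ _ H1a H).
      pose proof (Rmult_le_compat_r _ _ _ H1a H0). nra. }
  assert (Ha0 : 0 <= a 0%nat) by (apply (metric_nonneg d Hd)).
  assert (Hbound : forall m n, (m <= n)%nat -> d (y m) (y n) * (1 - al) <= a 0%nat * al ^ m).
  { intros m n Hmn. replace n with (m + (n - m))%nat by lia.
    pose proof (Hsum m (n - m)%nat). pose proof (Hpow0 (m + (n-m))%nat). nra. }
  assert (Hcau : is_Cauchy d y).
  { intros eps He.
    assert (Hcpos : 0 < eps * (1 - al) / (a 0%nat + 1)).
    { apply Rdiv_lt_0_compat; nra. }
    destruct (pow_lt_1_zero al ltac:(rewrite Rabs_right; lra) _ Hcpos) as [N HN].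
    exists N.
    assert (Hk : forall m n, (m >= N)%nat -> (m <= n)%nat -> d (y m) (y n) < eps).
    { intros m n Hm Hmn. pose proof (HN m Hm). rewrite Rabs_right in H by (apply Rle_ge; auto).
      pose proof (Hbound m n Hmn).
      set (c := eps * (1 - al) / (a 0%nat + 1)) in *.
      assert (Hc1 : c * (a 0%nat + 1) = eps * (1 - al)) by (unfold c; field; lra).
      assert (a 0%nat * al ^ m <= a 0%nat * c) by (apply Rmult_le_compat_l; lra).
      assert (d (y m) (y n) * (1 - al) < eps * (1 - al)) by nra.
      apply (Rmult_lt_reg_r (1 - al)); lra. }
    intros m n Hm Hn. destruct (Nat.le_ge_cases m n).
    - apply Hk; auto.
    - rewrite (metric_sym d Hd). apply Hk; auto. }
  destruct (Hcomplete y Hcau) as [z Hz].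
  assert (Hfz : seq_converges d (fun n => f (xs n)) z).
  { intros eps He. destruct (Hz eps He) as [N HN]. exists N. intros n Hn.
    rewrite <- HxS. apply (HN (S n)). lia. }
  assert (Hgf : seq_converges d (fun n => g (f (xs n))) (g z)).
  { apply (cont_seq d Hd g (fun n => f (xs n))); auto. }
  pose proof (Hiii xs z Hz Hfz) as Hcv.
  exists z.
  destruct Hv as [Hfc | Htcc].
  - apply (lim_unique d Hd (fun n => g (f (xs n))) (fun n => f (g (xs n)))); auto.
    + apply (cont_seq d Hd f y); auto.
    + intros eps He. destruct (Hcv eps He) as [N HN]. exists N. intros n Hn.
      specialize (HN n Hn). unfold R_dist in HN. rewrite Rminus_0_r in HN.
      pose proof (Rle_abs (d (g (f (xs n))) (f (g (xs n))))). lra.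
  - destruct (Htcc y z Hcomp Hz) as [phi [Hphi Hphc]].
    apply (lim_unique d Hd (fun k => g (f (xs (phi k)))) (fun k => f (g (xs (phi k))))).
    + apply (sub_conv d (fun n => g (f (xs n))) (g z) phi); auto.
    + assert (Hgg : seq_converges d (fun k => g (y (phi k))) (g z)).
      { apply (cont_seq d Hd g (fun k => y (phi k))); auto.
        apply (sub_conv d y z phi); auto. }
      intros eps He. destruct (Hgg eps He) as [N HN]. exists N. intros n Hn.
      specialize (HN n Hn). specialize (Hphc n).
      pose proof (Hc (g (xs (phi n))) z Hphc).
      pose proof (metric_nonneg d Hd (g (g (xs (phi n)))) (g z)).
      unfold y in HN. nra.
    + intros eps He. destruct (Hcv eps He) as [N HN]. exists N. intros n Hn.
      assert (Hpn : (phi n >= N)%nat) by (pose proof (phi_ge phi Hphi n); lia).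
      specialize (HN (phi n) Hpn). unfold R_dist in HN. rewrite Rminus_0_r in HN.
      pose proof (Rle_abs (d (g (f (xs (phi n)))) (f (g (xs (phi n)))))). lra.
Qed.
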